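(* Let $n>s\ge1$ be integers. If $F_{s,k}(n)\neq 0$ for every $k\in\{1,2,\dots,n\}$, then for any two $n$-multisets $A,B$ of complex numbers, $A^{(s)}=B^{(s)}$ implies $A=B$.
   Context: An $n$-multiset is a multiset $A=\{a_1,\dots,a_n\}$ of $n$ numbers, counted with multiplicity. For $1\le s\le n$, $A^{(s)}$ denotes the multiset of the $\binom{n}{s}$ numbers $a_{i_1}+\dots+a_{i_s}$ over all $1\le i_1<\dots<i_s\le n$. For an integer $j\ge0$, $\binom{x}{j}=x(x-1)\cdots(x-j+1)/j!$ as a polynomial in $x$, and $\binom{x}{j}=0$ for $j<0$. For integers $s\ge1$, $k\ge1$, the Moser polynomial is $F_{s,k}(x)=\sum_{p=1}^{s}(-1)^{p-1}p^{k-1}\binom{x}{s-p}$; for integers $s<1$ set $F_{s,k}\equiv0$. *)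

(* Defs.v *)
From HB Require Import structures.
From mathcomp Require Import all_boot all_order all_algebra.
Set Implicit Arguments. Unset Strict Implicit. Unset Printing Implicit Defensive.
Import Order.TTheory GRing.Theory Num.Theory.
Local Open Scope ring_scope.

(* Value at the natural number x = n of the Moser polynomial
   F_{s,k}(x) = \sum_{p=1}^{s} (-1)^(p-1) p^(k-1) binom(x, s-p),
   computed in int; for x = n a natural number the polynomial binom(x, j)
   evaluates to 'C(n, j) (j = s - p >= 0 since p <= s). *)
Definition moserF (s k n : nat) : int :=
  \sum_(1 <= p < s.+1) (-1) ^+ p.-1 * (p ^ k.-1)%:R * ('C(n, s - p))%:R.

(* A^(s): the multiset (as a sequence, compared up to permutation) of the
   sums a_{i_1} + ... + a_{i_s} over all s-subsets {i_1 < ... < i_s}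
   of the index set of the n-multiset A = (a_i)_{i < n}. *)
Definition subsums (C : nmodType) (n s : nat) (a : n.-tuple C) : seq C :=
  map (fun S0 : {set 'I_n} => \sum_(i in S0) tnth a i)
      (enum [set S0 : {set 'I_n} | #|S0| == s]).

(* Main.v *)
Require Import Defs.
From HB Require Import structures.
From mathcomp Require Import all_boot all_order all_algebra.
From mathcomp Require Import ring.
Set Implicit Arguments. Unset Strict Implicit. Unset Printing Implicit Defensive.
Import Order.TTheory GRing.Theory Num.Theory.
Local Open Scope ring_scope.

Section Gen.
Variables (C : numFieldType) (I : finType).

Lemma swapB (phi : {set I} -> I -> C) r :
  \sum_(S : {set I} | #|S| == r.+1) \sum_(l in S) phi (S :\ l) l =
  \sum_(S : {set I} | #|S| == r) \sum_(l | l \notin S) phi S l.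
Proof.
rewrite !pair_big_dep /=.
rewrite (reindex_onto (fun p : {set I} * I => (p.2 |: p.1, p.2))
                      (fun p : {set I} * I => (p.1 :\ p.2, p.2))) /=; last first.
  by case=> S l /= /andP[_ lS]; rewrite setD1K.
apply: eq_big => [[S l]|[S l]] /=.
  rewrite setU11 andbT cardsU1.
  have [lS|lS] := boolP (l \in S).
    rewrite andbF; apply/negbTE/negP => /andP[_ /eqP [E]].
    by move: (setD11 l (l |: S)); rewrite E lS.
  by rewrite setU1K // eqxx andbT add1n eqSS.
by move=> /andP[_ /eqP [->]].
Qed.


Section Tele.
Variable tau : {set I} -> I -> nat -> C.
Hypothesis htau : forall (S : {set I}) (l : I) (j : nat), l \in S -> tau S l j = tau (S :\ l) l j.+1.

Definition Tt r j := \sum_(S : {set I} | #|S| == r) \sum_(l | l \notin S) tau S l j.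
Definition Uu r j := \sum_(S : {set I} | #|S| == r) \sum_l tau S l j.

Lemma UuS r j : Uu r.+1 j = Tt r.+1 j + Tt r j.+1.
Proof.
rewrite /Uu /Tt -(swapB (fun S l => tau S l j.+1)) -big_split /=; apply: eq_bigr => S _.
rewrite (bigID (fun l => l \in S)) /= addrC; congr (_ + _).
by apply: eq_bigr => l lS; rewrite htau.
Qed.

Lemma Uu0 j : Uu 0 j = Tt 0 j.
Proof.
rewrite /Uu /Tt; apply: eq_bigr => S /eqP /cards0_eq ->.
by apply: eq_bigl => l; rewrite inE.
Qed.

Lemma tele r j : \sum_(i < r.+1) (-1)^+i * Uu (r - i)%N (j + i)%N = Tt r j.
Proof.
elim: r j => [|r IH] j.
  by rewrite big_ord1 expr0 mul1r addn0 Uu0.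
rewrite big_ord_recl expr0 mul1r /= addn0 UuS -[RHS]addr0 -addrA; congr (_ + _).
rewrite -(IH j.+1) -big_split big1 //= => i _.
by rewrite /bump leq0n add1n subSS addSnnS exprS mulN1r mulNr addrN.
Qed.

End Tele.

Definition Qs (a : I -> C) r k := \sum_(S : {set I} | #|S| == r) (\sum_(i in S) a i) ^+ k.
Definition ps (a : I -> C) m := \sum_i a i ^+ m.
Definition Zf (a : I -> C) r j k :=
  \sum_(m < k.+1) ('C(k, m) * j ^ m)%:R * Qs a r (k - m)%N * ps a m.+1.

Lemma Qrec a r k :
  Qs a r.+1 k.+1 = \sum_(i < r.+1) (-1)^+i * Zf a (r - i)%N i.+1 k.
Proof.
pose tau (S : {set I}) (l : I) (j : nat) := a l * (\sum_(i in S) a i + j%:R * a l) ^+ k.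
have htau : forall (S : {set I}) (l : I) (j : nat),
    l \in S -> tau S l j = tau (S :\ l) l j.+1.
  move=> S l j lS; rewrite /tau (big_setD1 l lS) /=.
  by rewrite -natr1; congr (_ * _ ^+ _); ring.
have := tele htau r 1; rewrite /Tt -(swapB (fun S l => tau S l 1)) => E.
transitivity (\sum_(S : {set I} | #|S| == r.+1) \sum_(l in S) tau (S :\ l) l 1).
  rewrite /Qs; apply: eq_bigr => S _.
  rewrite exprS mulr_suml; apply: eq_bigr => l lS.
  by rewrite /tau mul1r addrC -(big_setD1 l lS).
rewrite -E; apply: eq_bigr => i _; congr (_ * _).
rewrite /Uu /Zf /Qs /ps.
under eq_bigr => S _ do under eq_bigr => l _ do rewrite /tau exprDn mulr_sumr.
under eq_bigr => S _ do rewrite exchange_big /=.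
rewrite exchange_big /=; apply: eq_bigr => m _.
rewrite -mulrA [in RHS]mulr_suml [in RHS]mulr_sumr; apply: eq_bigr => S _.
rewrite [in RHS]mulr_sumr [in RHS]mulr_sumr; apply: eq_bigr => l _.
rewrite add1n natrM natrX exprMn -mulr_natr exprS.
move: (_ ^+ (k - m)) (a l ^+ m) (i.+1%:R ^+ m) => X Y Z; ring.
Qed.

Lemma Q0 a r : Qs a r 0 = 'C(#|I|, r)%:R.
Proof.
rewrite /Qs (eq_bigr (fun _ => 1)) => [|S _]; last by rewrite expr0.
rewrite (eq_bigl (fun S => S \in [set S : {set I} | #|S| == r])).
  by rewrite sumr_const card_draws.
by move=> S; rewrite inE.
Qed.

Lemma Q0S a k : Qs a 0 k.+1 = 0.
Proof.
by apply: big1 => S /eqP /cards0_eq ->; rewrite big_set0 expr0n.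
Qed.

Lemma Qeq a b K : (forall m, (1 <= m <= K)%N -> ps a m = ps b m) ->
  forall k, (k <= K)%N -> forall r, Qs a r k = Qs b r k.
Proof.
move=> hp; elim/ltn_ind => k IH hk r.
case: k IH hk => [|k] IH hk; first by rewrite !Q0.
case: r => [|r]; first by rewrite !Q0S.
rewrite !Qrec; apply: eq_bigr => i _; congr (_ * _).
apply: eq_bigr => m _; rewrite (IH (k - m)%N) ?hp //.
- by rewrite /= (leq_trans _ hk) // ltnS -ltnS.
- by rewrite ltnS leq_subr.
- by rewrite (leq_trans (leq_subr _ _) (ltnW hk)).
Qed.

Lemma Qdelta a b k : (forall m, (1 <= m <= k)%N -> ps a m = ps b m) ->
  forall r, Qs a r.+1 k.+1 - Qs b r.+1 k.+1 =
  (\sum_(i < r.+1) (-1)^+i * ((i.+1)^k * 'C(#|I|, (r - i)%N))%:R) *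
  (ps a k.+1 - ps b k.+1).
Proof.
move=> hp r; rewrite !Qrec -sumrB mulr_suml; apply: eq_bigr => i _.
rewrite -mulrBr -mulrA; congr (_ * _).
rewrite /Zf -sumrB big_ord_recr /= big1 ?add0r => [|m _].
  by rewrite subnn !Q0 binn mul1n -mulrBr natrM mulrC.
rewrite (Qeq hp) ?leq_subr // hp ?subrr //=.
Qed.

Definition es (a : I -> C) r := \sum_(S : {set I} | #|S| == r) \prod_(i in S) a i.

Lemma Newton a r :
  r.+1%:R * es a r.+1 = \sum_(i < r.+1) (-1)^+i * (es a (r - i)%N * ps a i.+1).
Proof.
pose tau (S : {set I}) (l : I) (j : nat) := (\prod_(i in S) a i) * a l ^+ j.
have htau : forall (S : {set I}) (l : I) (j : nat),
    l \in S -> tau S l j = tau (S :\ l) l j.+1.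
  move=> S l j lS; rewrite /tau (big_setD1 l lS) /= exprS; ring.
have := tele htau r 1; rewrite /Tt -(swapB (fun S l => tau S l 1)) => E.
transitivity (\sum_(S : {set I} | #|S| == r.+1) \sum_(l in S) tau (S :\ l) l 1).
  rewrite /es mulr_sumr; apply: eq_bigr => S /eqP cS.
  rewrite [RHS](eq_bigr (fun _ => \prod_(i in S) a i)) ?sumr_const ?cS.
    by rewrite mulr_natl.
  by move=> l lS; rewrite /tau expr1 mulrC -(big_setD1 l lS).
rewrite -E; apply: eq_bigr => i _; congr (_ * _).
rewrite /Uu /es /ps mulr_suml; apply: eq_bigr => S _.
by rewrite mulr_sumr.
Qed.

Lemma Eeq a b : (forall m, (1 <= m <= #|I|)%N -> ps a m = ps b m) ->
  forall r, es a r = es b r.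
Proof.
move=> hp; elim/ltn_ind => r IH.
case: r IH => [|r] IH.
  by apply: eq_bigr => S /eqP /cards0_eq ->; rewrite !big_set0.
have [lt|le] := ltnP #|I| r.+1.
  have H : forall S : {set I}, (#|S| == r.+1) = false.
    move=> S; apply/negbTE/eqP => cS; move: (max_card (mem S)).
    by rewrite cS leqNgt lt.
  by rewrite /es !big_pred0.
apply: (mulfI (x := r.+1%:R)); first by rewrite pnatr_eq0.
rewrite !Newton; apply: eq_bigr => i _.
rewrite IH ?hp //.
  by rewrite /= (leq_trans _ le).
by rewrite ltnS leq_subr.
Qed.

Lemma poly_exp a :
  \prod_(i : I) ('X - (a i)%:P) =
  \sum_(r < #|I|.+1) ((-1)^+r * es a r)%:P * 'X^(#|I| - r).
Proof.
rewrite (eq_bigr (fun i => - (a i)%:P + 'X)); last by move=> i _; rewrite addrC.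
rewrite bigA_distr.
rewrite (partition_big (fun J : {set I} => inord #|J| : 'I_(#|I|.+1)) xpredT) //=.
apply: eq_bigr => r _.
rewrite /es mulr_sumr rmorph_sum mulr_suml; apply: eq_big => [J|J /eqP <-].
  by rewrite -val_eqE /= inordK // ltnS max_card.
rewrite (bigID (mem J)) /= (eq_bigr (fun i => - (a i)%:P)); last first.
  by move=> i ->.
rewrite [X in _ * X](eq_bigr (fun _ => 'X)); last first.
  by move=> i /negbTE ->.
rewrite prodrN prodr_const rmorphM rmorphXn rmorphN rmorph1 rmorph_prod.
rewrite inordK ?ltnS ?max_card //.
have := cardC (mem J); rewrite addnC => <-; rewrite addnK.
done.
Qed.

End Gen.

Lemma coefE (C : numFieldType) r k n :
  (\sum_(i < r.+1) (-1)^+i * ((i.+1)^k * 'C(n, (r - i)%N))%:R : C) =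
  (moserF r.+1 k.+1 n)%:~R.
Proof.
rewrite /moserF big_add1 /= big_mkord rmorph_sum; apply: eq_bigr => i _.
by rewrite !rmorphM rmorphXn rmorphN rmorph1 !rmorph_nat subSS mulrA.
Qed.

Lemma QsE (C : numFieldType) n s k (A : n.-tuple C) :
  \sum_(x <- subsums s A) x ^+ k = Qs (fun i => tnth A i) s k.
Proof.
rewrite /subsums big_map big_enum /=; apply: eq_bigl => S.
by rewrite inE.
Qed.

Theorem mainTheorem5 (C : numClosedFieldType) (n s : nat) :
  (1 <= s)%N -> (s < n)%N ->
  (forall k : nat, (1 <= k <= n)%N -> moserF s k n != 0) ->
  forall A B : n.-tuple C,
    perm_eq (subsums s A) (subsums s B) -> perm_eq A B.
Proof.
move=> s1 sn hF A B hAB.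
pose a := fun i => tnth A i; pose b := fun i => tnth B i.
have hQ k : Qs a s k = Qs b s k.
  by rewrite -!QsE; apply: perm_big.
case: s s1 sn hF hQ hAB => [//|r] _ sn hF hQ _.
have hp : forall k, (k <= n)%N -> forall m, (1 <= m <= k)%N -> ps a m = ps b m.
  elim=> [|k IH] kn m /andP[m1 mk]; first by move: (leq_trans m1 mk).
  have IH' : forall m, (1 <= m <= k)%N -> ps a m = ps b m.
    by apply: IH; apply: ltnW.
  rewrite leq_eqVlt in mk; case/orP: mk => [/eqP ->|mk]; last first.
    by apply: IH'; rewrite m1.
  have := Qdelta IH' r; rewrite hQ subrr coefE => /esym/eqP.
  rewrite mulf_eq0 intr_eq0 card_ord (negbTE (hF _ _)) /=; last by rewrite kn.
  by rewrite subr_eq0 => /eqP.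
have he : forall r, es a r = es b r.
  apply: Eeq => m; rewrite card_ord => hm; apply: (hp n) => //.
apply: prod_XsubC_eq.
rewrite !big_tuple (poly_exp a) (poly_exp b) card_ord.
by apply: eq_bigr => i _; rewrite he.
Qed.
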